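(* Let $\alpha>0$, $\beta\in\mathbb{R}$, $\gamma>0$, and let $Q(z)=\sinh[\alpha(z-\beta)]$, so $q(z)=Q'(z)=\alpha\cosh[\alpha(z-\beta)]$, and $p(z)=1/\{1+\exp[-\sinh(\alpha(z-\beta))/\gamma]\}$. Let $H(z)=\gamma\log(1+e^{Q(z)/\gamma})$ and $\mathcal{L}_m(\hat s,s)=H(\hat s)-H(s)-(\hat s-s)H'(s)$. If $\gamma\le1/\sqrt2$, then $\mathcal{L}_m(\hat s,s)$ is convex in $\hat s\in\mathbb{R}$ for every $s\in\mathbb{R}$ (i.e. a convex selective matching loss with this scaling exists).
   Context: $H$ is the $\gamma$-regularized composite Softplus primitive, with link $H'(z)=q(z)p(z)$. *)

(* Defs.v *)
From Stdlib Require Import Reals.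
Open Scope R_scope.

Definition Qf (alpha beta z : R) : R := sinh (alpha * (z - beta)).

Definition qf (alpha beta z : R) : R := alpha * cosh (alpha * (z - beta)).

Definition pf (alpha beta gamma z : R) : R :=
  1 / (1 + exp (- sinh (alpha * (z - beta)) / gamma)).

Definition Hf (alpha beta gamma z : R) : R :=
  gamma * ln (1 + exp (Qf alpha beta z / gamma)).

(* H'(z) = q(z) p(z)  (the link of H, as in the paper) *)
Definition Hlink (alpha beta gamma z : R) : R :=
  qf alpha beta z * pf alpha beta gamma z.

Definition Lm (alpha beta gamma shat s : R) : R :=
  Hf alpha beta gamma shat - Hf alpha beta gamma s
  - (shat - s) * Hlink alpha beta gamma s.

Definition convex_on_R (f : R -> R) : Prop :=
  forall x y t : R, 0 <= t <= 1 ->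
    f (t * x + (1 - t) * y) <= t * f x + (1 - t) * f y.

(* Main.v *)
Require Import Defs.
From Stdlib Require Import Reals.
From Coquelicot Require Import Coquelicot.
From Stdlib Require Import Lra Psatz.
Open Scope R_scope.
Lemma dH (a b g z : R) : 0 < g -> is_derive (fun z => g * ln (1 + exp (sinh (a*(z-b)) / g))) z
  (a * cosh (a*(z-b)) / (1 + exp (- sinh (a*(z-b)) / g))).
Proof. intros. unfold sinh, cosh. auto_derive.
- pose proof (exp_pos ((exp (a * (z + - b)) + - exp (- (a * (z + - b)))) * / 2 * / g)); lra.
- replace (z + - b) with (z - b) by ring.
  set (u := a * (z - b)).
  set (S := (exp u + - exp (- u)) * / 2 * / g).
  replace (- ((exp u - exp (- u)) / 2) / g) with (- S) by (unfold S; unfold Rminus, Rdiv; ring).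
  rewrite (exp_Ropp S). assert (0 < exp S) by apply exp_pos. assert (0 < exp u) by apply exp_pos. field. repeat split; lra.
Qed.
Lemma ddH (a b g z : R) : 0 < g -> is_derive (fun z => a * cosh (a*(z-b)) / (1 + exp (- sinh (a*(z-b)) / g))) z
  (a * a * (sinh (a*(z-b)) * (1 + exp (- sinh (a*(z-b)) / g)) + cosh (a*(z-b)) * cosh (a*(z-b)) * exp (- sinh (a*(z-b)) / g) / g) / ((1 + exp (- sinh (a*(z-b)) / g)) * (1 + exp (- sinh (a*(z-b)) / g)))).
Proof. intros. unfold sinh, cosh. auto_derive.
- pose proof (exp_pos (- ((exp (a * (z + - b)) + - exp (- (a * (z + - b)))) * / 2) * / g)); lra.
- replace (z + - b) with (z - b) by ring.
  set (u := a * (z - b)).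
  set (E := exp (- ((exp u + - exp (- u)) * / 2) * / g)).
  replace (exp (- ((exp u - exp (- u)) / 2) / g)) with E by (unfold E; f_equal; field; lra).
  assert (0 < E) by apply exp_pos. field. split; lra.
Qed.

Lemma cont_of (f df : R -> R) x : (forall x, is_derive f x (df x)) -> continuity_pt f x.
Proof. intros Hd. apply derivable_continuous_pt.
  exists (df x). apply is_derive_Reals. apply Hd. Qed.

Lemma mono_of (f df : R -> R) : (forall x, is_derive f x (df x)) -> (forall x, 0 <= df x) ->
  forall x y, x <= y -> f x <= f y.
Proof. intros Hd Hp x y Hxy.
  destruct (MVT_gen f x y df) as [c [_ Hc]].
  - intros; apply Hd.
  - intros; apply (cont_of f df); auto.
  - pose proof (Hp c). nra.
Qed.

Lemma cvx_lt (f df : R -> R) : (forall x, is_derive f x (df x)) -> (forall x y, x <= y -> df x <= df y) ->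
  forall x y t, x < y -> 0 <= t <= 1 -> f (t * x + (1 - t) * y) <= t * f x + (1 - t) * f y.
Proof. intros Hd Hm x y t Hxy Ht.
  set (z := t * x + (1 - t) * y).
  assert (x <= z <= y) by (unfold z; nra).
  destruct (MVT_gen f x z df) as [c1 [Hc1 E1]].
  { intros; apply Hd. } { intros; apply (cont_of f df); auto. }
  destruct (MVT_gen f z y df) as [c2 [Hc2 E2]].
  { intros; apply Hd. } { intros; apply (cont_of f df); auto. }
  rewrite Rmin_left in Hc1 by lra. rewrite Rmax_right in Hc1 by lra.
  rewrite Rmin_left in Hc2 by lra. rewrite Rmax_right in Hc2 by lra.
  assert (df c1 <= df c2) by (apply Hm; lra).
  assert (E: t * f x + (1 - t) * f y - f z = t * (1 - t) * (y - x) * (df c2 - df c1)).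
  { replace (f x) with (f z - df c1 * (z - x)) by lra.
    replace (f y) with (f z + df c2 * (y - z)) by lra. unfold z. ring. }
  assert (0 <= t * (1 - t) * (y - x) * (df c2 - df c1)).
  { apply Rmult_le_pos; [|lra]. apply Rmult_le_pos; [|lra]. nra. }
  lra.
Qed.

Lemma cvx_of (f df : R -> R) : (forall x, is_derive f x (df x)) -> (forall x y, x <= y -> df x <= df y) ->
  convex_on_R f.
Proof. intros Hd Hm x y t Ht.
  destruct (Rtotal_order x y) as [H|[H|H]].
  - apply (cvx_lt f df); auto.
  - subst. replace (t * y + (1 - t) * y) with y by ring. lra.
  - pose proof (cvx_lt f df Hd Hm y x (1 - t) H ltac:(lra)).
    replace (t * x + (1 - t) * y) with ((1 - t) * y + (1 - (1 - t)) * x) by ring. lra.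
Qed.

Theorem corollaryG4 (alpha beta gamma : R) :
  0 < alpha -> 0 < gamma -> gamma <= 1 / sqrt 2 ->
  forall s : R, convex_on_R (fun shat => Lm alpha beta gamma shat s).
Proof.
  intros Ha Hg Hg2 s.
  assert (Hg1 : gamma <= 1).
  { assert (1 <= sqrt 2). { rewrite <- sqrt_1. apply sqrt_le_1_alt. lra. }
    assert (1 / sqrt 2 <= 1). { apply Rmult_le_reg_r with (sqrt 2); [lra|].
      field_simplify; lra. }
    lra. }
  set (c := Hlink alpha beta gamma s).
  set (d := Hf alpha beta gamma s).
  set (a := alpha). set (b := beta). set (g := gamma).
  set (D := fun z => a * cosh (a*(z-b)) / (1 + exp (- sinh (a*(z-b)) / g))).
  apply (cvx_of _ (fun z => D z - c)).
  - intros x. unfold Lm, Hf, Qf. fold d. fold c.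
    assert (H1 := dH a b g x Hg).
    assert (H2 : is_derive (fun shat => d + (shat - s) * c) x c) by (auto_derive; auto; ring).
    pose proof (is_derive_minus _ _ x _ _ H1 H2) as H3.
    replace (D x - c) with (minus (D x) c) by (unfold minus, plus, opp; simpl; ring).
    eapply is_derive_ext; [|exact H3].
    intro t; simpl. unfold minus, plus, opp; simpl. unfold d, c, Hf, Qf, a, b, g. ring.
  - intros x y Hxy. cut (D x <= D y); [lra|].
    apply (mono_of D _ (fun z => ddH a b g z Hg)); auto.
    intros z. set (S := sinh (a*(z-b))). set (E := exp (- S / g)). set (C := cosh (a*(z-b))).
    assert (HE : 0 < E) by apply exp_pos.
    assert (HC : C * C = 1 + S * S).
    { unfold C, S. unfold cosh, sinh.
      assert (exp (a*(z-b)) * exp (- (a*(z-b))) = 1) by (rewrite <- exp_plus; replace (a * (z - b) + - (a * (z - b))) with 0 by ring; apply exp_0).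
      nra. }
    assert (Hig : 0 < / g) by (apply Rinv_0_lt_compat; unfold g; lra).
    assert (Hig1 : 1 <= / g).
    { rewrite <- Rinv_1. apply Rinv_le_contravar; unfold g; lra. }
    assert (Hnum : 0 <= S * (1 + E) + C * C * E / g).
    { rewrite HC. unfold Rdiv. destruct (Rle_dec 0 S).
      - assert (0 <= (1 + S*S) * E * / g). { apply Rmult_le_pos; [nra|lra]. }
        nra.
      - assert (1 <= E).
        { unfold E. rewrite <- exp_0. apply Rlt_le, exp_increasing.
          unfold Rdiv. apply Rmult_lt_0_compat; lra. }
        assert (0 < 1 + S*S) by nra.
        assert ((1 + S*S) * E <= (1 + S*S) * E * / g).
        { rewrite <- (Rmult_1_r ((1 + S*S) * E)) at 1. apply Rmult_le_compat_l; nra. }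
        assert (HP : 0 < S + 1 + S * S) by (pose proof (Rle_0_sqr (S + 1/2)); unfold Rsqr in *; nra).
        assert (HQ : 0 <= (E - 1) * (S + 1 + S * S)) by (apply Rmult_le_pos; lra).
        assert (0 <= (1 + S) * (1 + S)) by (pose proof (Rle_0_sqr (1 + S)); unfold Rsqr in *; lra).
        assert (EQ : S * (1 + E) + (1 + S * S) * E = (1 + S) * (1 + S) + (E - 1) * (S + 1 + S * S)) by ring.
        lra. }
    apply Rmult_le_pos.
    + apply Rmult_le_pos; [nra|]. unfold g in *. exact Hnum.
    + apply Rlt_le, Rinv_0_lt_compat. nra.
Qed.
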